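(* Let $x_2=F(t,x,x_1)$ be a second-order ODE and suppose that for some smooth $H=H(t,x,x_1)$ the system $(S_H)$ admits a nonlocal symmetry $\mathbf{v}=\xi\partial_t+\eta^0\partial_x+\psi^0\partial_w$ (coefficients functions of $(t,x,x_1,w)$) with associated functionally independent functions $z=z(t,x)$, $\zeta=\zeta(t,x,x_1)$, i.e. $\mathbf v(z)=0$, $\mathbf v^{(1)}(\zeta)|_\Delta=0$ and the equation can be written in terms of $\{z,\zeta,\zeta_z\}$ as a first-order ODE. Then: (i) If $\xi\neq0$, the functions $\eta^0/\xi$ and $\widetilde\lambda=\frac{\xi_t+\xi_xx_1+\xi_{x_1}F+\xi_wH}{\xi}$ do not depend on $w$, and the pair $\widetilde{\mathbf X}=\partial_t+\frac{\eta^0}{\xi}\partial_x$, $\widetilde\lambda$ defines a $\lambda$-symmetry of $x_2=F$. (ii) If $\xi=0$, the function $\widetilde\lambda=\frac{\eta^0_t+\eta^0_xx_1+\eta^0_{x_1}F+\eta^0_wH}{\eta^0}$ does not depend on $w$, and the pair $\widetilde{\mathbf X}=\partial_x$, $\widetilde\lambda$ defines a $\lambda$-symmetry of $x_2=F$. In both cases $\{z,\zeta,\zeta_z\}$ is a complete system of invariants of $\widetilde{\mathbf X}^{[\widetilde\lambda,(1)]}$.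
   Context: Let $F=F(t,x,x_1)$ be smooth, and for a smooth $H=H(t,x,x_1)$ let $(S_H)$ be the system $x_2=F(t,x,x_1)$, $w_1=H(t,x,x_1)$ in the dependent variables $x,w$; $\Delta$ denotes the submanifold of the jet space defined by $(S_H)$. $\widetilde D_t=\partial_t+x_1\partial_x+x_2\partial_{x_1}+w_1\partial_w+\cdots$ is the total derivative in these variables, and $D_t=\partial_t+x_1\partial_x+x_2\partial_{x_1}+\cdots$. For $\mathbf v=\xi\partial_t+\eta^0\partial_x+\psi^0\partial_w$ with coefficients depending on $(t,x,x_1,w)$, its prolongation $\mathbf v^{(k)}$ adds $\sum_{i=1}^k(\eta^i\partial_{x_i}+\psi^i\partial_{w_i})$ with $\eta^i=\widetilde D_t(\eta^{i-1})-\widetilde D_t(\xi)x_i$, $\psi^i=\widetilde D_t(\psi^{i-1})-\widetilde D_t(\xi)w_i$. $\mathbf v$ is a (generalized) symmetry of $(S_H)$ if $\mathbf v^{(2)}(x_2-F)$ and $\mathbf v^{(2)}(w_1-H)$ vanish on $\Delta$. A nonlocal symmetry of $x_2=F$ associated to $(S_H)$ is such a symmetry with $(\xi_w)^2+(\eta^0_w)^2\neq0$ for which there exist functionally independent $z=z(t,x)$, $\zeta=\zeta(t,x,x_1)$ (with $\zeta_{x_1}\ne0$) such that $\mathbf v(z)=0$, $\mathbf v^{(1)}(\zeta)|_\Delta=0$, and $x_2=F$ can be written in terms of $\{z,\zeta,\zeta_z\}$, $\zeta_z=D_t\zeta/D_tz$, as a first-order ODE. For $\lambda=\lambda(t,x,x_1)$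 and $\mathbf X=\rho(t,x)\partial_t+\phi^0(t,x)\partial_x$, $\mathbf{X}^{[\lambda,(k)]}=\rho\partial_t+\phi^0\partial_x+\sum_{i=1}^k\phi^{[\lambda,(i)]}\partial_{x_i}$, $\phi^{[\lambda,(0)]}=\phi^0$, $\phi^{[\lambda,(i)]}=D_t(\phi^{[\lambda,(i-1)]})-D_t(\rho)x_i+\lambda(\phi^{[\lambda,(i-1)]}-\rho x_i)$; $(\mathbf X,\lambda)$ defines a $\lambda$-symmetry of $x_2=F$ if $\mathbf X^{[\lambda,(2)]}$ is tangent to $\{x_2=F\}$. *)

(* Defs.v *)
From Stdlib Require Import Reals List ClassicalEpsilon.
Open Scope R_scope.

Definition deriv1 (g : R -> R) (a : R) : R :=
  epsilon (inhabits 0%R) (fun l => derivable_pt_lim g a l).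

Definition fun4 := R -> R -> R -> R -> R.
Definition fun3 := R -> R -> R -> R.
Definition fun2 := R -> R -> R.

Definition slice4 (i : nat) (f : fun4) (t x x1 w : R) : R -> R :=
  match i with
  | 0%nat => fun s => f s x x1 w
  | 1%nat => fun s => f t s x1 w
  | 2%nat => fun s => f t x s w
  | _ => fun s => f t x x1 s
  end.
Definition pick4 (i : nat) (t x x1 w : R) : R :=
  match i with 0%nat => t | 1%nat => x | 2%nat => x1 | _ => w end.

Definition pd4 (i : nat) (f : fun4) : fun4 :=
  fun t x x1 w => deriv1 (slice4 i f t x x1 w) (pick4 i t x x1 w).

Fixpoint iter4 (l : list nat) (f : fun4) : fun4 :=
  match l with nil => f | i :: l' => pd4 i (iter4 l' f) end.

Definition cont4 (f : fun4) (t x x1 w : R) : Prop :=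
  forall eps, 0 < eps -> exists d, 0 < d /\
    forall t' x' x1' w', Rabs (t' - t) < d -> Rabs (x' - x) < d ->
      Rabs (x1' - x1) < d -> Rabs (w' - w) < d ->
      Rabs (f t' x' x1' w' - f t x x1 w) < eps.

Definition smooth4 (f : fun4) : Prop :=
  forall l : list nat,
    (forall t x x1 w, cont4 (iter4 l f) t x x1 w) /\
    (forall i t x x1 w, (i < 4)%nat ->
       exists d, derivable_pt_lim (slice4 i (iter4 l f) t x x1 w) (pick4 i t x x1 w) d).

Definition lift3 (F : fun3) : fun4 := fun t x x1 _ => F t x x1.
Definition lift2 (g : fun2) : fun4 := fun t x _ _ => g t x.
Definition smooth3 (F : fun3) : Prop := smooth4 (lift3 F).
Definition smooth2 (g : fun2) : Prop := smooth4 (lift2 g).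

Definition pt4 := pd4 0.  Definition px4 := pd4 1.
Definition px14 := pd4 2. Definition pw4 := pd4 3.
Definition pt3 (F : fun3) : fun3 := fun t x x1 => deriv1 (fun s => F s x x1) t.
Definition px3 (F : fun3) : fun3 := fun t x x1 => deriv1 (fun s => F t s x1) x.
Definition px13 (F : fun3) : fun3 := fun t x x1 => deriv1 (fun s => F t x s) x1.
Definition pt2 (g : fun2) : fun2 := fun t x => deriv1 (fun s => g s x) t.
Definition px2 (g : fun2) : fun2 := fun t x => deriv1 (fun s => g t s) x.

Definition Dt2 (g : fun2) : fun3 := fun t x x1 => pt2 g t x + x1 * px2 g t x.
Definition Dt3 (f : fun3) : fun4 :=
  fun t x x1 x2 => pt3 f t x x1 + x1 * px3 f t x x1 + x2 * px13 f t x x1.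

(* On (the prolongation of) Delta, with coordinates (t,x,x1,w), the total derivative
   \tilde D_t acts on functions of (t,x,x1,w) as
   A f = f_t + x1 f_x + F f_{x1} + H f_w. *)
Definition Atot (F H : fun3) (f : fun4) : fun4 :=
  fun t x x1 w => pt4 f t x x1 w + x1 * px4 f t x x1 w
                 + F t x x1 * px14 f t x x1 w + H t x x1 * pw4 f t x x1 w.

Definition eta1 (F H : fun3) (xi eta0 : fun4) : fun4 :=
  fun t x x1 w => Atot F H eta0 t x x1 w - Atot F H xi t x x1 w * x1.

(* (generalized) symmetry v = xi d_t + eta0 d_x + psi0 d_w of (S_H):
   v^(2)(x2 - F) and v^(2)(w1 - H) vanish on Delta, where on Delta
   eta^2 = \tilde D_t(eta^1) - \tilde D_t(xi) x2  becomes  A(eta^1) - A(xi) F,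
   psi^1 = \tilde D_t(psi^0) - \tilde D_t(xi) w1 becomes  A(psi^0) - A(xi) H. *)
Definition gen_symmetry (F H : fun3) (xi eta0 psi0 : fun4) : Prop :=
  (forall t x x1 w,
     (Atot F H (eta1 F H xi eta0) t x x1 w - Atot F H xi t x x1 w * F t x x1)
     - (xi t x x1 w * pt3 F t x x1 + eta0 t x x1 w * px3 F t x x1
        + eta1 F H xi eta0 t x x1 w * px13 F t x x1) = 0)
  /\
  (forall t x x1 w,
     (Atot F H psi0 t x x1 w - Atot F H xi t x x1 w * H t x x1)
     - (xi t x x1 w * pt3 H t x x1 + eta0 t x x1 w * px3 H t x x1
        + eta1 F H xi eta0 t x x1 w * px13 H t x x1) = 0).

Definition zeta_z (z : fun2) (zeta : fun3) : fun4 :=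
  fun t x x1 x2 => Dt3 zeta t x x1 x2 / Dt2 z t x x1.

(* z(t,x), zeta(t,x,x1): the 2x3 Jacobian [[z_t, z_x, 0],[zeta_t, zeta_x, zeta_x1]] has rank 2 *)
Definition func_indep2 (z : fun2) (zeta : fun3) (t x x1 : R) : Prop :=
  pt2 z t x * px3 zeta t x x1 - px2 z t x * pt3 zeta t x x1 <> 0
  \/ pt2 z t x * px13 zeta t x x1 <> 0
  \/ px2 z t x * px13 zeta t x x1 <> 0.

Definition det3 (a11 a12 a13 a21 a22 a23 a31 a32 a33 : R) : R :=
  a11 * (a22 * a33 - a23 * a32) - a12 * (a21 * a33 - a23 * a31)
  + a13 * (a21 * a32 - a22 * a31).

(* three functions f,g,h of (t,x,x1,x2): the 3x4 Jacobian has rank 3 at the point *)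
Definition func_indep3 (f g h : fun4) (t x x1 x2 : R) : Prop :=
  exists i j k : nat, (i < j)%nat /\ (j < k)%nat /\ (k < 4)%nat /\
    det3 (pd4 i f t x x1 x2) (pd4 j f t x x1 x2) (pd4 k f t x x1 x2)
         (pd4 i g t x x1 x2) (pd4 j g t x x1 x2) (pd4 k g t x x1 x2)
         (pd4 i h t x x1 x2) (pd4 j h t x x1 x2) (pd4 k h t x x1 x2) <> 0.

(* ---------- lambda-prolongations of X = rho(t,x) d_t + phi0(t,x) d_x ---------- *)
Definition phi1 (rho phi0 : fun2) (lam : fun3) : fun3 :=
  fun t x x1 => Dt2 phi0 t x x1 - Dt2 rho t x x1 * x1
                + lam t x x1 * (phi0 t x - rho t x * x1).
Definition phi2 (rho phi0 : fun2) (lam : fun3) : fun4 :=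
  fun t x x1 x2 => Dt3 (phi1 rho phi0 lam) t x x1 x2 - Dt2 rho t x x1 * x2
                   + lam t x x1 * (phi1 rho phi0 lam t x x1 - rho t x * x2).

(* (X, lam) is a lambda-symmetry of x2 = F: X^{[lam,(2)]} is tangent to {x2 = F},
   i.e. X^{[lam,(2)]}(x2 - F) = 0 on x2 = F. *)
Definition lambda_symmetry (F : fun3) (rho phi0 : fun2) (lam : fun3) : Prop :=
  forall t x x1,
    phi2 rho phi0 lam t x x1 (F t x x1)
    - (rho t x * pt3 F t x x1 + phi0 t x * px3 F t x x1
       + phi1 rho phi0 lam t x x1 * px13 F t x x1) = 0.

(* {z, zeta, zeta_z} is a complete system of invariants of the lambda-prolongation:
   z, zeta are functionally independent invariants of X^{[lam,(1)]} on (t,x,x1)-space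
   (2 = dim - 1 of them), and zeta_z is an invariant of X^{[lam,(2)]}, with z, zeta, zeta_z
   functionally independent on (t,x,x1,x2)-space (3 = dim - 1 of them), wherever
   zeta_z is defined (D_t z <> 0). *)
Definition complete_invariants (rho phi0 : fun2) (lam : fun3) (z : fun2) (zeta : fun3) : Prop :=
  (forall t x, rho t x * pt2 z t x + phi0 t x * px2 z t x = 0)
  /\ (forall t x x1, rho t x * pt3 zeta t x x1 + phi0 t x * px3 zeta t x x1
                     + phi1 rho phi0 lam t x x1 * px13 zeta t x x1 = 0)
  /\ (forall t x x1, func_indep2 z zeta t x x1)
  /\ (forall t x x1 x2, Dt2 z t x x1 <> 0 ->
        rho t x * pt4 (zeta_z z zeta) t x x1 x2 + phi0 t x * px4 (zeta_z z zeta) t x x1 x2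
        + phi1 rho phi0 lam t x x1 * px14 (zeta_z z zeta) t x x1 x2
        + phi2 rho phi0 lam t x x1 x2 * pw4 (zeta_z z zeta) t x x1 x2 = 0)
  /\ (forall t x x1 x2, Dt2 z t x x1 <> 0 ->
        func_indep3 (lift2 z) (lift3 zeta) (zeta_z z zeta) t x x1 x2).

(* Main.v *)
Require Import Defs.
From Stdlib Require Import Reals Lra Lia List ClassicalEpsilon FunctionalExtensionality.
From Coquelicot Require Import Coquelicot.
Open Scope R_scope.

Lemma deriv1_eq g a l : derivable_pt_lim g a l -> deriv1 g a = l.
Proof.
  intro H. unfold deriv1.
  assert (E : exists l, derivable_pt_lim g a l) by eauto.
  pose proof (epsilon_spec (inhabits 0) _ E) as H2.
  eapply uniqueness_limite; eauto.
Qed.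

Lemma dl_val g a l l' : derivable_pt_lim g a l -> l = l' -> derivable_pt_lim g a l'.
Proof. intros H ->; exact H. Qed.
Lemma dl_plus f g a lf lg : derivable_pt_lim f a lf -> derivable_pt_lim g a lg ->
  derivable_pt_lim (fun s => f s + g s) a (lf + lg).
Proof. intros; apply (derivable_pt_lim_plus f g); auto. Qed.
Lemma dl_mult f g a lf lg : derivable_pt_lim f a lf -> derivable_pt_lim g a lg ->
  derivable_pt_lim (fun s => f s * g s) a (lf * g a + f a * lg).
Proof. intros; apply (derivable_pt_lim_mult f g); auto. Qed.
Lemma dl_opp f a lf : derivable_pt_lim f a lf ->
  derivable_pt_lim (fun s => - f s) a (- lf).
Proof. intros; apply (derivable_pt_lim_opp f); auto. Qed.
Lemma dl_const c a : derivable_pt_lim (fun _ => c) a 0.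
Proof. apply derivable_pt_lim_const. Qed.
Lemma dl_id a : derivable_pt_lim (fun s => s) a 1.
Proof. apply derivable_pt_lim_id. Qed.
Lemma dl_inv g a l : derivable_pt_lim g a l -> g a <> 0 ->
  derivable_pt_lim (fun s => / g s) a (- l * (/ g a * / g a)).
Proof.
  intros H Hg.
  assert (E : (fun s => / g s) = (fun s => 1 / g s)).
  { apply functional_extensionality; intro s; unfold Rdiv; ring. }
  rewrite E. eapply dl_val.
  - apply (derivable_pt_lim_div (fun _ => 1) g); [apply dl_const | exact H | exact Hg].
  - unfold Rsqr; field; auto.
Qed.
Lemma deriv1_const c a : deriv1 (fun _ => c) a = 0.
Proof. apply deriv1_eq, dl_const. Qed.
Lemma deriv1_id a : deriv1 (fun s => s) a = 1.
Proof. apply deriv1_eq, dl_id. Qed.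

Lemma h2 (h : R -> R -> R) x y :
  filterlim (fun z : R * R => h (fst z) (snd z)) (filter_prod (locally x) (locally y)) (locally (h x y)) ->
  forall eps, 0 < eps -> exists d, 0 < d /\ forall a b, Rabs (a - x) < d -> Rabs (b - y) < d -> Rabs (h a b - h x y) < eps.
Proof.
  intros H eps He.
  assert (L : locally (h x y) (fun u => Rabs (u - h x y) < eps)).
  { exists (mkposreal eps He). intros u Hu. exact Hu. }
  specialize (H _ L). destruct H as [Q R0 [e1 HQ] [e2 HR] HP].
  exists (Rmin e1 e2). split. { apply Rmin_pos; apply cond_pos. }
  intros a b Ha Hb. apply (HP a b).
  - apply HQ. change (Rabs (a - x) < e1). pose proof (Rmin_l e1 e2). lra.
  - apply HR. change (Rabs (b - y) < e2). pose proof (Rmin_r e1 e2). lra.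
Qed.
Lemma h1 (h : R -> R) x :
  filterlim h (locally x) (locally (h x)) ->
  forall eps, 0 < eps -> exists d, 0 < d /\ forall a, Rabs (a - x) < d -> Rabs (h a - h x) < eps.
Proof.
  intros H eps He.
  assert (L : locally (h x) (fun u => Rabs (u - h x) < eps)).
  { exists (mkposreal eps He). intros u Hu. exact Hu. }
  specialize (H _ L). destruct H as [e1 HQ].
  exists e1. split. { apply cond_pos. }
  intros a Ha. apply HQ. exact Ha.
Qed.
Lemma fl_mul x y : filterlim (fun z : R * R => Rmult (fst z) (snd z)) (filter_prod (locally x) (locally y)) (locally (Rmult x y)).
Proof. apply (filterlim_Rbar_mult x y (x*y)). reflexivity. Qed.
Lemma fl_plus x y : filterlim (fun z : R * R => Rplus (fst z) (snd z)) (filter_prod (locally x) (locally y)) (locally (Rplus x y)).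
Proof. apply (filterlim_Rbar_plus x y (x+y)). reflexivity. Qed.
Lemma fl_inv x : x <> 0 -> filterlim Rinv (locally x) (locally (Rinv x)).
Proof. intro Hx. apply (filterlim_Rbar_inv x). intro E. apply Hx. injection E. auto. Qed.
Lemma fl_opp x : filterlim Ropp (locally x) (locally (Ropp x)).
Proof. apply (filterlim_Rbar_opp x). Qed.

Lemma cont4_comp2 (h : R -> R -> R) f g t x x1 w :
  cont4 f t x x1 w -> cont4 g t x x1 w ->
  filterlim (fun z : R * R => h (fst z) (snd z))
    (filter_prod (locally (f t x x1 w)) (locally (g t x x1 w))) (locally (h (f t x x1 w) (g t x x1 w))) ->
  cont4 (fun a b c d => h (f a b c d) (g a b c d)) t x x1 w.
Proof.
  intros Cf Cg Hh eps He.
  destruct (h2 _ _ _ Hh eps He) as [d [Hd Hd']].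
  destruct (Cf d Hd) as [d1 [Hd1 H1]]. destruct (Cg d Hd) as [d2 [Hd2 H2]].
  exists (Rmin d1 d2). split. apply Rmin_pos; auto.
  intros t' x' x1' w' A B C D.
  pose proof (Rmin_l d1 d2). pose proof (Rmin_r d1 d2).
  apply Hd'; [apply H1 | apply H2]; lra.
Qed.
Lemma cont4_comp1 (h : R -> R) f t x x1 w :
  cont4 f t x x1 w ->
  filterlim h (locally (f t x x1 w)) (locally (h (f t x x1 w))) ->
  cont4 (fun a b c d => h (f a b c d)) t x x1 w.
Proof.
  intros Cf Hh eps He.
  destruct (h1 _ _ Hh eps He) as [d [Hd Hd']].
  destruct (Cf d Hd) as [d1 [Hd1 H1]].
  exists d1. split. auto.
  intros t' x' x1' w' A B C D. apply Hd'; apply H1; auto.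
Qed.

Definition C4 (f : fun4) := forall t x x1 w, cont4 f t x x1 w.
Definition D4 (f : fun4) := forall i t x x1 w, exists d,
  derivable_pt_lim (slice4 i f t x x1 w) (pick4 i t x x1 w) d.

Fixpoint smn (n : nat) (f : fun4) : Prop :=
  match n with 0%nat => True | S m => C4 f /\ D4 f /\ forall i, smn m (pd4 i f) end.

Lemma iter4_app l m f : iter4 (l ++ m) f = iter4 l (iter4 m f).
Proof. induction l; simpl; congruence. Qed.

Lemma smooth_pd i f : smooth4 f -> smooth4 (pd4 i f).
Proof.
  intros H l. change (pd4 i f) with (iter4 (i :: nil) f). rewrite <- iter4_app. apply H.
Qed.

Lemma smooth_D4 f : smooth4 f -> D4 f.
Proof.
  intros H i t x x1 w. destruct (H nil) as [_ D].
  destruct i as [|[|[|[|i]]]]; try (apply D; lia).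
  exact (D 3%nat t x x1 w ltac:(lia)).
Qed.
Lemma smooth_C4 f : smooth4 f -> C4 f.
Proof. intros H. exact (proj1 (H nil)). Qed.

Lemma smooth_smn f : smooth4 f -> forall n, smn n f.
Proof.
  intros H n. revert f H. induction n; intros f H; simpl; auto.
  split; [apply smooth_C4; auto|]. split; [apply smooth_D4; auto|].
  intro i. apply IHn, smooth_pd, H.
Qed.

Lemma smn_iter l : forall k f, smn (length l + k) f -> smn k (iter4 l f).
Proof.
  induction l as [|a l IH]; intros k f H; simpl in *; auto.
  assert (H' : smn (S k) (iter4 l f)).
  { apply IH. rewrite Nat.add_succ_r. exact H. }
  exact (proj2 (proj2 H') a).
Qed.

Lemma smn_smooth f : (forall n, smn n f) -> smooth4 f.
Proof.
  intros H l. pose proof (smn_iter l 1 f (H _)) as [C [D _]]. split; auto.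
Qed.

Lemma smn_le n f : smn (S n) f -> smn n f.
Proof.
  revert f; induction n; intros f H; simpl in *; auto.
  destruct H as [C [D P]]. repeat split; auto.
Qed.

Lemma slice_op2 (op : R -> R -> R) i f g t x x1 w :
  slice4 i (fun a b c d => op (f a b c d) (g a b c d)) t x x1 w
  = fun s => op (slice4 i f t x x1 w s) (slice4 i g t x x1 w s).
Proof. destruct i as [|[|[|i]]]; reflexivity. Qed.
Lemma slice_op1 (op : R -> R) i f t x x1 w :
  slice4 i (fun a b c d => op (f a b c d)) t x x1 w
  = fun s => op (slice4 i f t x x1 w s).
Proof. destruct i as [|[|[|i]]]; reflexivity. Qed.
Lemma slice_pick i f t x x1 w : slice4 i f t x x1 w (pick4 i t x x1 w) = f t x x1 w.
Proof. destruct i as [|[|[|i]]]; reflexivity. Qed.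

Lemma pd4_val f i t x x1 w d :
  derivable_pt_lim (slice4 i f t x x1 w) (pick4 i t x x1 w) d -> pd4 i f t x x1 w = d.
Proof. intro H. unfold pd4. apply deriv1_eq, H. Qed.
Lemma pd4_spec f i t x x1 w : D4 f ->
  derivable_pt_lim (slice4 i f t x x1 w) (pick4 i t x x1 w) (pd4 i f t x x1 w).
Proof. intro D. destruct (D i t x x1 w) as [d H]. rewrite (pd4_val _ _ _ _ _ _ _ H). exact H. Qed.

Lemma pd4_plus i f g t x x1 w : D4 f -> D4 g ->
  pd4 i (fun a b c d => f a b c d + g a b c d) t x x1 w = pd4 i f t x x1 w + pd4 i g t x x1 w.
Proof. intros Df Dg. apply pd4_val. rewrite slice_op2. apply dl_plus; apply pd4_spec; auto. Qed.
Lemma pd4_mult i f g t x x1 w : D4 f -> D4 g ->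
  pd4 i (fun a b c d => f a b c d * g a b c d) t x x1 w
  = pd4 i f t x x1 w * g t x x1 w + f t x x1 w * pd4 i g t x x1 w.
Proof.
  intros Df Dg. apply pd4_val. rewrite slice_op2. eapply dl_val.
  apply dl_mult; apply pd4_spec; auto. rewrite !slice_pick. reflexivity.
Qed.
Lemma pd4_opp i f t x x1 w : D4 f ->
  pd4 i (fun a b c d => - f a b c d) t x x1 w = - pd4 i f t x x1 w.
Proof. intros Df. apply pd4_val. rewrite slice_op1. apply dl_opp; apply pd4_spec; auto. Qed.
Lemma pd4_inv i f t x x1 w : D4 f -> f t x x1 w <> 0 ->
  pd4 i (fun a b c d => / f a b c d) t x x1 w
  = - pd4 i f t x x1 w * (/ f t x x1 w * / f t x x1 w).
Proof.
  intros Df Hf. apply pd4_val. rewrite slice_op1. eapply dl_val.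
  apply dl_inv. apply pd4_spec; auto. rewrite slice_pick; auto. rewrite slice_pick. reflexivity.
Qed.
Lemma pd4_const i c t x x1 w : pd4 i (fun _ _ _ _ => c) t x x1 w = 0.
Proof. apply pd4_val. destruct i as [|[|[|i]]]; exact (dl_const _ _). Qed.

Definition cl (i : nat) : nat := match i with 0 => 0 | 1 => 1 | 2 => 2 | _ => 3 end.
Definition crd (k : nat) : fun4 := fun t x x1 w => pick4 k t x x1 w.
Lemma pd4_crd i k t x x1 w : pd4 i (crd k) t x x1 w = if Nat.eqb (cl i) (cl k) then 1 else 0.
Proof.
  apply pd4_val. unfold crd.
  destruct i as [|[|[|i]]]; destruct k as [|[|[|k]]]; simpl; first [exact (dl_id _) | exact (dl_const _ _)].
Qed.

Lemma D4_plus f g : D4 f -> D4 g -> D4 (fun a b c d => f a b c d + g a b c d).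
Proof. intros Df Dg i t x x1 w. eexists. rewrite slice_op2. apply dl_plus; apply pd4_spec; auto. Qed.
Lemma D4_mult f g : D4 f -> D4 g -> D4 (fun a b c d => f a b c d * g a b c d).
Proof. intros Df Dg i t x x1 w. eexists. rewrite slice_op2. apply dl_mult; apply pd4_spec; auto. Qed.
Lemma D4_opp f : D4 f -> D4 (fun a b c d => - f a b c d).
Proof. intros Df i t x x1 w. eexists. rewrite slice_op1. apply dl_opp; apply pd4_spec; auto. Qed.
Lemma D4_inv f : D4 f -> (forall a b c d, f a b c d <> 0) -> D4 (fun a b c d => / f a b c d).
Proof. intros Df Hf i t x x1 w. eexists. rewrite slice_op1. apply dl_inv. apply pd4_spec; auto. rewrite slice_pick; auto. Qed.
Lemma D4_const c : D4 (fun _ _ _ _ => c).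
Proof. intros i t x x1 w. exists 0. destruct i as [|[|[|i]]]; exact (dl_const _ _). Qed.
Lemma D4_crd k : D4 (crd k).
Proof. intros i t x x1 w. unfold crd. destruct i as [|[|[|i]]]; destruct k as [|[|[|k]]]; simpl; eexists; first [exact (dl_id _) | exact (dl_const _ _)]. Qed.

Lemma C4_plus f g : C4 f -> C4 g -> C4 (fun a b c d => f a b c d + g a b c d).
Proof. intros Cf Cg t x x1 w. apply (cont4_comp2 Rplus); auto. apply fl_plus. Qed.
Lemma C4_mult f g : C4 f -> C4 g -> C4 (fun a b c d => f a b c d * g a b c d).
Proof. intros Cf Cg t x x1 w. apply (cont4_comp2 Rmult); auto. apply fl_mul. Qed.
Lemma C4_opp f : C4 f -> C4 (fun a b c d => - f a b c d).
Proof. intros Cf t x x1 w. apply (cont4_comp1 Ropp); auto. apply fl_opp. Qed.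
Lemma C4_inv f : C4 f -> (forall a b c d, f a b c d <> 0) -> C4 (fun a b c d => / f a b c d).
Proof. intros Cf Hf t x x1 w. apply (cont4_comp1 Rinv); auto. apply fl_inv; auto. Qed.
Lemma C4_const c : C4 (fun _ _ _ _ => c).
Proof. intros t x x1 w eps He. exists 1. split. lra. intros. unfold Rminus. rewrite Rplus_opp_r, Rabs_R0. auto. Qed.
Lemma C4_crd k : C4 (crd k).
Proof. intros t x x1 w eps He. exists eps. split. auto. intros. unfold crd. destruct k as [|[|[|k]]]; simpl; auto. Qed.

Ltac fext := apply functional_extensionality; intro; apply functional_extensionality; intro;
             apply functional_extensionality; intro; apply functional_extensionality; intro.

Lemma smn_const n c : smn n (fun _ _ _ _ => c).
Proof.
  revert c; induction n; intro c; simpl; auto. split; [apply C4_const|]. split; [apply D4_const|].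
  intro i. replace (pd4 i (fun _ _ _ _ => c)) with (fun _ _ _ _ : R => 0). apply IHn.
  fext. rewrite pd4_const. reflexivity.
Qed.
Lemma smn_crd n k : smn n (crd k).
Proof.
  destruct n; simpl; auto. split; [apply C4_crd|]. split; [apply D4_crd|].
  intro i. replace (pd4 i (crd k)) with (fun _ _ _ _ : R => if Nat.eqb (cl i) (cl k) then 1 else 0).
  apply smn_const. fext. rewrite pd4_crd. reflexivity.
Qed.
Lemma smn_plus n : forall f g, smn n f -> smn n g -> smn n (fun a b c d => f a b c d + g a b c d).
Proof.
  induction n; intros f g Hf Hg; simpl in *; auto.
  destruct Hf as [Cf [Df Pf]], Hg as [Cg [Dg Pg]].
  split; [apply C4_plus; auto|]. split; [apply D4_plus; auto|].
  intro i. replace (pd4 i _) with (fun a b c d => pd4 i f a b c d + pd4 i g a b c d).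
  apply IHn; auto. fext. rewrite pd4_plus; auto.
Qed.
Lemma smn_opp n : forall f, smn n f -> smn n (fun a b c d => - f a b c d).
Proof.
  induction n; intros f Hf; simpl in *; auto.
  destruct Hf as [Cf [Df Pf]].
  split; [apply C4_opp; auto|]. split; [apply D4_opp; auto|].
  intro i. replace (pd4 i _) with (fun a b c d => - pd4 i f a b c d).
  apply IHn; auto. fext. rewrite pd4_opp; auto.
Qed.
Lemma smn_mult n : forall f g, smn n f -> smn n g -> smn n (fun a b c d => f a b c d * g a b c d).
Proof.
  induction n; intros f g Hf Hg; simpl; auto.
  pose proof (smn_le _ _ Hf) as Hf'. pose proof (smn_le _ _ Hg) as Hg'.
  destruct Hf as [Cf [Df Pf]], Hg as [Cg [Dg Pg]].
  split; [apply C4_mult; auto|]. split; [apply D4_mult; auto|].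
  intro i. replace (pd4 i _) with (fun a b c d => pd4 i f a b c d * g a b c d + f a b c d * pd4 i g a b c d).
  apply smn_plus; apply IHn; auto. fext. rewrite pd4_mult; auto.
Qed.
Lemma smn_inv n : forall f, smn n f -> (forall a b c d, f a b c d <> 0) -> smn n (fun a b c d => / f a b c d).
Proof.
  induction n; intros f Hf Hnz; simpl; auto.
  pose proof (smn_le _ _ Hf) as Hf'.
  destruct Hf as [Cf [Df Pf]].
  split; [apply C4_inv; auto|]. split; [apply D4_inv; auto|].
  intro i. replace (pd4 i _) with (fun a b c d => - pd4 i f a b c d * (/ f a b c d * / f a b c d)).
  apply smn_mult. apply smn_opp; auto. apply smn_mult; apply IHn; auto.
  fext. rewrite pd4_inv; auto.
Qed.

Lemma Sm_const c : smooth4 (fun _ _ _ _ => c).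
Proof. apply smn_smooth; intro; apply smn_const. Qed.
Lemma Sm_t : smooth4 (fun t _ _ _ => t).
Proof. apply smn_smooth; intro; apply (smn_crd _ 0). Qed.
Lemma Sm_x : smooth4 (fun _ x _ _ => x).
Proof. apply smn_smooth; intro; apply (smn_crd _ 1). Qed.
Lemma Sm_x1 : smooth4 (fun _ _ x1 _ => x1).
Proof. apply smn_smooth; intro; apply (smn_crd _ 2). Qed.
Lemma Sm_w : smooth4 (fun _ _ _ w => w).
Proof. apply smn_smooth; intro; apply (smn_crd _ 3). Qed.
Lemma Sm_plus f g : smooth4 f -> smooth4 g -> smooth4 (fun a b c d => f a b c d + g a b c d).
Proof. intros; apply smn_smooth; intro; apply smn_plus; apply smooth_smn; auto. Qed.
Lemma Sm_mult f g : smooth4 f -> smooth4 g -> smooth4 (fun a b c d => f a b c d * g a b c d).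
Proof. intros; apply smn_smooth; intro; apply smn_mult; apply smooth_smn; auto. Qed.
Lemma Sm_opp f : smooth4 f -> smooth4 (fun a b c d => - f a b c d).
Proof. intros; apply smn_smooth; intro; apply smn_opp; apply smooth_smn; auto. Qed.
Lemma Sm_inv f : smooth4 f -> (forall a b c d, f a b c d <> 0) -> smooth4 (fun a b c d => / f a b c d).
Proof. intros; apply smn_smooth; intro; apply smn_inv; auto; apply smooth_smn; auto. Qed.
Lemma Sm_minus f g : smooth4 f -> smooth4 g -> smooth4 (fun a b c d => f a b c d - g a b c d).
Proof. intros. unfold Rminus. apply Sm_plus; auto. apply Sm_opp; auto. Qed.
Lemma Sm_div f g : smooth4 f -> smooth4 g -> (forall a b c d, g a b c d <> 0) -> smooth4 (fun a b c d => f a b c d / g a b c d).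
Proof. intros. unfold Rdiv. apply Sm_mult; auto. apply Sm_inv; auto. Qed.

Lemma Derive_of g a l : derivable_pt_lim g a l -> Derive g a = l.
Proof. intro H. apply is_derive_unique. apply is_derive_Reals. exact H. Qed.

Lemma schwarz_gen (F Fu Fv Fuv Fvu : R -> R -> R) a b :
  (forall u v, derivable_pt_lim (fun s => F s v) u (Fu u v)) ->
  (forall u v, derivable_pt_lim (fun s => F u s) v (Fv u v)) ->
  (forall u v, derivable_pt_lim (fun s => Fv s v) u (Fvu u v)) ->
  (forall u v, derivable_pt_lim (fun s => Fu u s) v (Fuv u v)) ->
  continuity_2d_pt Fvu a b -> continuity_2d_pt Fuv a b ->
  Fvu a b = Fuv a b.
Proof.
  intros H1 H2 H3 H4 C1 C2.
  assert (E1 : forall v, (fun z => Derive (fun t => F z t) v) = (fun z => Fv z v)).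
  { intro v; apply functional_extensionality; intro z; apply Derive_of; auto. }
  assert (E2 : forall u, (fun z => Derive (fun t => F t z) u) = (fun z => Fu u z)).
  { intro u; apply functional_extensionality; intro z; apply Derive_of; auto. }
  assert (E3 : (fun u v => Derive (fun z => Derive (fun t => F z t) v) u) = Fvu).
  { apply functional_extensionality; intro u; apply functional_extensionality; intro v.
    rewrite E1. apply Derive_of; auto. }
  assert (E4 : (fun u v => Derive (fun z => Derive (fun t => F t z) u) v) = Fuv).
  { apply functional_extensionality; intro u; apply functional_extensionality; intro v.
    rewrite E2. apply Derive_of; auto. }
  pose proof (Schwarz F a b) as S.
  rewrite E3, E4 in S.
  rewrite <- (Derive_of _ _ _ (H3 a b)), <- (Derive_of _ _ _ (H4 a b)).
  rewrite <- E1, <- E2. apply S; auto.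
  apply locally_2d_forall. intros u v. repeat split.
  - exists (Fu u v). apply is_derive_Reals; auto.
  - exists (Fv u v). apply is_derive_Reals; auto.
  - rewrite E1. exists (Fvu u v). apply is_derive_Reals; auto.
  - rewrite E2. exists (Fuv u v). apply is_derive_Reals; auto.
Qed.

Lemma mkpos_lt e (H : 0 < e) : pos (mkposreal e H) = e. Proof. reflexivity. Qed.

Lemma c2d_01 g t x x1 w : cont4 g t x x1 w -> continuity_2d_pt (fun u v => g u v x1 w) t x.
Proof.
  intros C eps. destruct (C eps (cond_pos eps)) as [d [Hd H]].
  exists (mkposreal d Hd). intros u v Hu Hv. simpl in Hu, Hv. apply H; auto;
  unfold Rminus; rewrite Rplus_opp_r, Rabs_R0; auto.
Qed.
Lemma c2d_02 g t x x1 w : cont4 g t x x1 w -> continuity_2d_pt (fun u v => g u x v w) t x1.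
Proof.
  intros C eps. destruct (C eps (cond_pos eps)) as [d [Hd H]].
  exists (mkposreal d Hd). intros u v Hu Hv. simpl in Hu, Hv. apply H; auto;
  unfold Rminus; rewrite Rplus_opp_r, Rabs_R0; auto.
Qed.
Lemma c2d_12 g t x x1 w : cont4 g t x x1 w -> continuity_2d_pt (fun u v => g t u v w) x x1.
Proof.
  intros C eps. destruct (C eps (cond_pos eps)) as [d [Hd H]].
  exists (mkposreal d Hd). intros u v Hu Hv. simpl in Hu, Hv. apply H; auto;
  unfold Rminus; rewrite Rplus_opp_r, Rabs_R0; auto.
Qed.

Lemma schwarz01 f t x x1 w : smooth4 f ->
  pd4 0 (pd4 1 f) t x x1 w = pd4 1 (pd4 0 f) t x x1 w.
Proof.
  intro Sf.
  pose proof (smooth_D4 _ Sf) as Df.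
  pose proof (smooth_D4 _ (smooth_pd 0 _ Sf)) as D0.
  pose proof (smooth_D4 _ (smooth_pd 1 _ Sf)) as D1.
  apply (schwarz_gen (fun u v => f u v x1 w) (fun u v => pd4 0 f u v x1 w) (fun u v => pd4 1 f u v x1 w)
           (fun u v => pd4 1 (pd4 0 f) u v x1 w) (fun u v => pd4 0 (pd4 1 f) u v x1 w) t x).
  - intros u v. exact (pd4_spec f 0 u v x1 w Df).
  - intros u v. exact (pd4_spec f 1 u v x1 w Df).
  - intros u v. exact (pd4_spec _ 0 u v x1 w D1).
  - intros u v. exact (pd4_spec _ 1 u v x1 w D0).
  - apply c2d_01. apply smooth_C4. apply smooth_pd, smooth_pd, Sf.
  - apply c2d_01. apply smooth_C4. apply smooth_pd, smooth_pd, Sf.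
Qed.
Lemma schwarz02 f t x x1 w : smooth4 f ->
  pd4 0 (pd4 2 f) t x x1 w = pd4 2 (pd4 0 f) t x x1 w.
Proof.
  intro Sf.
  pose proof (smooth_D4 _ Sf) as Df.
  pose proof (smooth_D4 _ (smooth_pd 0 _ Sf)) as D0.
  pose proof (smooth_D4 _ (smooth_pd 2 _ Sf)) as D1.
  apply (schwarz_gen (fun u v => f u x v w) (fun u v => pd4 0 f u x v w) (fun u v => pd4 2 f u x v w)
           (fun u v => pd4 2 (pd4 0 f) u x v w) (fun u v => pd4 0 (pd4 2 f) u x v w) t x1).
  - intros u v. exact (pd4_spec f 0 u x v w Df).
  - intros u v. exact (pd4_spec f 2 u x v w Df).
  - intros u v. exact (pd4_spec _ 0 u x v w D1).
  - intros u v. exact (pd4_spec _ 2 u x v w D0).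
  - apply c2d_02. apply smooth_C4. apply smooth_pd, smooth_pd, Sf.
  - apply c2d_02. apply smooth_C4. apply smooth_pd, smooth_pd, Sf.
Qed.
Lemma schwarz12 f t x x1 w : smooth4 f ->
  pd4 1 (pd4 2 f) t x x1 w = pd4 2 (pd4 1 f) t x x1 w.
Proof.
  intro Sf.
  pose proof (smooth_D4 _ Sf) as Df.
  pose proof (smooth_D4 _ (smooth_pd 1 _ Sf)) as D0.
  pose proof (smooth_D4 _ (smooth_pd 2 _ Sf)) as D1.
  apply (schwarz_gen (fun u v => f t u v w) (fun u v => pd4 1 f t u v w) (fun u v => pd4 2 f t u v w)
           (fun u v => pd4 2 (pd4 1 f) t u v w) (fun u v => pd4 1 (pd4 2 f) t u v w) x x1).
  - intros u v. exact (pd4_spec f 1 t u v w Df).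
  - intros u v. exact (pd4_spec f 2 t u v w Df).
  - intros u v. exact (pd4_spec _ 1 t u v w D1).
  - intros u v. exact (pd4_spec _ 2 t u v w D0).
  - apply c2d_12. apply smooth_C4. apply smooth_pd, smooth_pd, Sf.
  - apply c2d_12. apply smooth_C4. apply smooth_pd, smooth_pd, Sf.
Qed.

Lemma dl_minus f g a lf lg : derivable_pt_lim f a lf -> derivable_pt_lim g a lg ->
  derivable_pt_lim (fun s => f s - g s) a (lf - lg).
Proof. intros; apply (derivable_pt_lim_minus f g); auto. Qed.

Lemma L3_0 g x x1 t : smooth3 g -> derivable_pt_lim (fun s => g s x x1) t (pt3 g t x x1).
Proof. intro S. exact (pd4_spec (lift3 g) 0 t x x1 0 (smooth_D4 _ S)). Qed.
Lemma L3_1 g t x1 x : smooth3 g -> derivable_pt_lim (fun s => g t s x1) x (px3 g t x x1).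
Proof. intro S. exact (pd4_spec (lift3 g) 1 t x x1 0 (smooth_D4 _ S)). Qed.
Lemma L3_2 g t x x1 : smooth3 g -> derivable_pt_lim (fun s => g t x s) x1 (px13 g t x x1).
Proof. intro S. exact (pd4_spec (lift3 g) 2 t x x1 0 (smooth_D4 _ S)). Qed.
Lemma L2_0 g x t : smooth2 g -> derivable_pt_lim (fun s => g s x) t (pt2 g t x).
Proof. intro S. exact (pd4_spec (lift2 g) 0 t x 0 0 (smooth_D4 _ S)). Qed.
Lemma L2_1 g t x : smooth2 g -> derivable_pt_lim (fun s => g t s) x (px2 g t x).
Proof. intro S. exact (pd4_spec (lift2 g) 1 t x 0 0 (smooth_D4 _ S)). Qed.
Lemma L4_0 g x x1 w t : smooth4 g -> derivable_pt_lim (fun s => g s x x1 w) t (pt4 g t x x1 w).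
Proof. intro S. exact (pd4_spec g 0 t x x1 w (smooth_D4 _ S)). Qed.
Lemma L4_1 g t x1 w x : smooth4 g -> derivable_pt_lim (fun s => g t s x1 w) x (px4 g t x x1 w).
Proof. intro S. exact (pd4_spec g 1 t x x1 w (smooth_D4 _ S)). Qed.
Lemma L4_2 g t x w x1 : smooth4 g -> derivable_pt_lim (fun s => g t x s w) x1 (px14 g t x x1 w).
Proof. intro S. exact (pd4_spec g 2 t x x1 w (smooth_D4 _ S)). Qed.
Lemma L4_3 g t x x1 w : smooth4 g -> derivable_pt_lim (fun s => g t x x1 s) w (pw4 g t x x1 w).
Proof. intro S. exact (pd4_spec g 3 t x x1 w (smooth_D4 _ S)). Qed.

Ltac dch := repeat match goal with
 | |- derivable_pt_lim (fun _ => ?c) _ _ => exact (dl_const c _)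
 | |- derivable_pt_lim (fun s => s) _ _ => exact (dl_id _)
 | |- derivable_pt_lim (fun s => _ + _) _ _ => eapply dl_plus
 | |- derivable_pt_lim (fun s => _ - _) _ _ => eapply dl_minus
 | |- derivable_pt_lim (fun s => _ * _) _ _ => eapply dl_mult
 | |- derivable_pt_lim (fun s => - _) _ _ => eapply dl_opp
 | |- derivable_pt_lim (?g ?t ?x ?x1) ?w _ => apply (L4_3 g t x x1 w); assumption
 | |- derivable_pt_lim (?g ?t ?x) ?x1 _ => apply (L3_2 g t x x1); assumption
 | |- derivable_pt_lim (?g ?t) ?x _ => apply (L2_1 g t x); assumption
 | |- derivable_pt_lim (fun s => ?g s ?x ?x1 ?w) ?t _ => apply (L4_0 g x x1 w t); assumption
 | |- derivable_pt_lim (fun s => ?g ?t s ?x1 ?w) ?x _ => apply (L4_1 g t x1 w x); assumption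
 | |- derivable_pt_lim (fun s => ?g ?t ?x s ?w) ?x1 _ => apply (L4_2 g t x w x1); assumption
 | |- derivable_pt_lim (fun s => ?g ?t ?x ?x1 s) ?w _ => apply (L4_3 g t x x1 w); assumption
 | |- derivable_pt_lim (fun s => ?g s ?x ?x1) ?t _ => apply (L3_0 g x x1 t); assumption
 | |- derivable_pt_lim (fun s => ?g ?t s ?x1) ?x _ => apply (L3_1 g t x1 x); assumption
 | |- derivable_pt_lim (fun s => ?g ?t ?x s) ?x1 _ => apply (L3_2 g t x x1); assumption
 | |- derivable_pt_lim (fun s => ?g s ?x) ?t _ => apply (L2_0 g x t); assumption
 | |- derivable_pt_lim (fun s => ?g ?t s) ?x _ => apply (L2_1 g t x); assumption
 end.

Ltac smt := repeat match goal with
 | |- smooth4 (fun _ _ _ _ => ?c) => apply Sm_const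
 | |- smooth4 (fun t _ _ _ => t) => apply Sm_t
 | |- smooth4 (fun _ x _ _ => x) => apply Sm_x
 | |- smooth4 (fun _ _ x1 _ => x1) => apply Sm_x1
 | |- smooth4 (fun _ _ _ w => w) => apply Sm_w
 | |- smooth4 (fun a b c d => _ + _) => apply Sm_plus
 | |- smooth4 (fun a b c d => _ - _) => apply Sm_minus
 | |- smooth4 (fun a b c d => _ * _) => apply Sm_mult
 | |- smooth4 (fun a b c d => - _) => apply Sm_opp
 | |- smooth4 (fun a b c d => ?g a b c d) => assumption
 | |- smooth4 (fun a b c d => ?g a b c) => change (smooth3 g); assumption
 | |- smooth4 (fun a b c d => ?g a b) => change (smooth2 g); assumption
 end.

Lemma Sm_pt3 g : smooth3 g -> smooth3 (pt3 g). Proof. intro S. exact (smooth_pd 0 _ S). Qed.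
Lemma Sm_px3 g : smooth3 g -> smooth3 (px3 g). Proof. intro S. exact (smooth_pd 1 _ S). Qed.
Lemma Sm_px13 g : smooth3 g -> smooth3 (px13 g). Proof. intro S. exact (smooth_pd 2 _ S). Qed.
Lemma Sm_pt2 g : smooth2 g -> smooth2 (pt2 g). Proof. intro S. exact (smooth_pd 0 _ S). Qed.
Lemma Sm_px2 g : smooth2 g -> smooth2 (px2 g). Proof. intro S. exact (smooth_pd 1 _ S). Qed.
Lemma Sm_pt4 g : smooth4 g -> smooth4 (pt4 g). Proof. intro S. exact (smooth_pd 0 _ S). Qed.
Lemma Sm_px4 g : smooth4 g -> smooth4 (px4 g). Proof. intro S. exact (smooth_pd 1 _ S). Qed.
Lemma Sm_px14 g : smooth4 g -> smooth4 (px14 g). Proof. intro S. exact (smooth_pd 2 _ S). Qed.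
Lemma Sm_pw4 g : smooth4 g -> smooth4 (pw4 g). Proof. intro S. exact (smooth_pd 3 _ S). Qed.

Lemma Sm_phi1 rho phi0 lam : smooth2 rho -> smooth2 phi0 -> smooth3 lam -> smooth3 (phi1 rho phi0 lam).
Proof.
  intros Hr Hp Hl. pose proof (Sm_pt2 _ Hr). pose proof (Sm_px2 _ Hr).
  pose proof (Sm_pt2 _ Hp). pose proof (Sm_px2 _ Hp).
  unfold smooth3, lift3, phi1, Dt2. smt.
Qed.

Lemma Sm_Dt3 f : smooth3 f -> smooth4 (Dt3 f).
Proof.
  intro Hf. pose proof (Sm_pt3 _ Hf). pose proof (Sm_px3 _ Hf). pose proof (Sm_px13 _ Hf).
  change (Dt3 f) with (fun t x x1 x2 => pt3 f t x x1 + x1 * px3 f t x x1 + x2 * px13 f t x x1). smt.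
Qed.

Lemma dl_zero g a l : (forall s, g s = 0) -> derivable_pt_lim g a l -> l = 0.
Proof.
  intros Z H. assert (E : g = fun _ => 0) by (apply functional_extensionality; auto).
  subst g. eapply uniqueness_limite; [exact H | apply dl_const].
Qed.

Lemma S3_01 f t x x1 : smooth3 f -> pt3 (px3 f) t x x1 = px3 (pt3 f) t x x1.
Proof. intro S. exact (schwarz01 (lift3 f) t x x1 0 S). Qed.
Lemma S3_02 f t x x1 : smooth3 f -> pt3 (px13 f) t x x1 = px13 (pt3 f) t x x1.
Proof. intro S. exact (schwarz02 (lift3 f) t x x1 0 S). Qed.
Lemma S3_12 f t x x1 : smooth3 f -> px3 (px13 f) t x x1 = px13 (px3 f) t x x1.
Proof. intro S. exact (schwarz12 (lift3 f) t x x1 0 S). Qed.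

Lemma inv_Dt3 (rho phi0 : fun2) (lam f : fun3) :
  smooth2 rho -> smooth2 phi0 -> smooth3 lam -> smooth3 f ->
  (forall t x x1, rho t x * pt3 f t x x1 + phi0 t x * px3 f t x x1
                  + phi1 rho phi0 lam t x x1 * px13 f t x x1 = 0) ->
  forall t x x1 x2,
   rho t x * pt4 (Dt3 f) t x x1 x2 + phi0 t x * px4 (Dt3 f) t x x1 x2
   + phi1 rho phi0 lam t x x1 * px14 (Dt3 f) t x x1 x2
   + phi2 rho phi0 lam t x x1 x2 * pw4 (Dt3 f) t x x1 x2
   = - (Dt2 rho t x x1 + lam t x x1 * rho t x) * Dt3 f t x x1 x2.
Proof.
  intros Hr Hp Hl Hf Inv t x x1 x2.
  pose proof (Sm_pt3 _ Hf). pose proof (Sm_px3 _ Hf). pose proof (Sm_px13 _ Hf).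
  pose proof (Sm_phi1 _ _ _ Hr Hp Hl) as Hphi1.
  assert (E0 : pt4 (Dt3 f) t x x1 x2 = pt3 (pt3 f) t x x1 + x1 * pt3 (px3 f) t x x1 + x2 * pt3 (px13 f) t x x1).
  { apply pd4_val. cbv beta iota delta [slice4 pick4 Dt3]. (eapply dl_val; [dch|]; cbv beta; ring). }
  assert (E1 : px4 (Dt3 f) t x x1 x2 = px3 (pt3 f) t x x1 + x1 * px3 (px3 f) t x x1 + x2 * px3 (px13 f) t x x1).
  { apply pd4_val. cbv beta iota delta [slice4 pick4 Dt3]. (eapply dl_val; [dch|]; cbv beta; ring). }
  assert (E2 : px14 (Dt3 f) t x x1 x2 = px13 (pt3 f) t x x1 + px3 f t x x1 + x1 * px13 (px3 f) t x x1 + x2 * px13 (px13 f) t x x1).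
  { apply pd4_val. cbv beta iota delta [slice4 pick4 Dt3]. (eapply dl_val; [dch|]; cbv beta; ring). }
  assert (E3 : pw4 (Dt3 f) t x x1 x2 = px13 f t x x1).
  { apply pd4_val. cbv beta iota delta [slice4 pick4 Dt3]. (eapply dl_val; [dch|]; cbv beta; ring). }
  assert (I0 : pt2 rho t x * pt3 f t x x1 + rho t x * pt3 (pt3 f) t x x1
             + (pt2 phi0 t x * px3 f t x x1 + phi0 t x * pt3 (px3 f) t x x1)
             + (pt3 (phi1 rho phi0 lam) t x x1 * px13 f t x x1 + phi1 rho phi0 lam t x x1 * pt3 (px13 f) t x x1) = 0).
  { eapply dl_zero with (g := fun s => rho s x * pt3 f s x x1 + phi0 s x * px3 f s x x1
                  + phi1 rho phi0 lam s x x1 * px13 f s x x1) (a := t); [ | (eapply dl_val; [dch|]; cbv beta; ring)].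
    intro s. apply Inv. }
  assert (I1 : px2 rho t x * pt3 f t x x1 + rho t x * px3 (pt3 f) t x x1
             + (px2 phi0 t x * px3 f t x x1 + phi0 t x * px3 (px3 f) t x x1)
             + (px3 (phi1 rho phi0 lam) t x x1 * px13 f t x x1 + phi1 rho phi0 lam t x x1 * px3 (px13 f) t x x1) = 0).
  { eapply dl_zero with (g := fun s => rho t s * pt3 f t s x1 + phi0 t s * px3 f t s x1
                  + phi1 rho phi0 lam t s x1 * px13 f t s x1) (a := x); [ | (eapply dl_val; [dch|]; cbv beta; ring)].
    intro s. apply Inv. }
  assert (I2 : rho t x * px13 (pt3 f) t x x1
             + (phi0 t x * px13 (px3 f) t x x1)
             + (px13 (phi1 rho phi0 lam) t x x1 * px13 f t x x1 + phi1 rho phi0 lam t x x1 * px13 (px13 f) t x x1) = 0).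
  { eapply dl_zero with (g := fun s => rho t x * pt3 f t x s + phi0 t x * px3 f t x s
                  + phi1 rho phi0 lam t x s * px13 f t x s) (a := x1); [ | (eapply dl_val; [dch|]; cbv beta; ring)].
    intro s. apply Inv. }
  pose proof (Inv t x x1) as I.
  rewrite E0, E1, E2, E3.
  rewrite (S3_01 f t x x1 Hf), (S3_02 f t x x1 Hf), (S3_12 f t x x1 Hf) in *.
  unfold phi2, phi1, Dt2, Dt3 in *.
  let e0 := match type of I0 with ?e = _ => e end in
  let e1 := match type of I1 with ?e = _ => e end in
  let e2 := match type of I2 with ?e = _ => e end in
  let e := match type of I with ?e = _ => e end in
  apply Rminus_diag_uniq;
  transitivity (e0 + x1 * e1 + x2 * e2 + lam t x x1 * e);
  [ring | rewrite I0, I1, I2, I; ring].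
Qed.

Lemma pw_lift3 g t x x1 w : pd4 3 (lift3 g) t x x1 w = 0.
Proof. apply pd4_val. exact (dl_const _ _). Qed.
Lemma p2_lift2 g t x x1 w : pd4 2 (lift2 g) t x x1 w = 0.
Proof. apply pd4_val. exact (dl_const _ _). Qed.
Lemma p3_lift2 g t x x1 w : pd4 3 (lift2 g) t x x1 w = 0.
Proof. apply pd4_val. exact (dl_const _ _). Qed.

Lemma pd4_div i f g t x x1 w : D4 f -> D4 g -> g t x x1 w <> 0 ->
  pd4 i (fun a b c d => f a b c d / g a b c d) t x x1 w
  = (pd4 i f t x x1 w * g t x x1 w - pd4 i g t x x1 w * f t x x1 w) / (g t x x1 w)².
Proof.
  intros Df Dg Hg. apply pd4_val. rewrite slice_op2. eapply dl_val.
  apply (derivable_pt_lim_div (slice4 i f t x x1 w) (slice4 i g t x x1 w)); try apply pd4_spec; auto.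
  rewrite slice_pick; auto. rewrite !slice_pick. reflexivity.
Qed.

Lemma pw4_Dt3 f t x x1 x2 : smooth3 f -> pw4 (Dt3 f) t x x1 x2 = px13 f t x x1.
Proof.
  intro Hf. pose proof (Sm_pt3 _ Hf). pose proof (Sm_px3 _ Hf). pose proof (Sm_px13 _ Hf).
  apply pd4_val. cbv beta iota delta [slice4 pick4 Dt3]. (eapply dl_val; [dch|]; cbv beta; ring).
Qed.

Lemma complete_inv (rho phi0 : fun2) (lam : fun3) (z : fun2) (zeta : fun3) :
  smooth2 rho -> smooth2 phi0 -> smooth3 lam -> smooth2 z -> smooth3 zeta ->
  (forall t x, rho t x * pt2 z t x + phi0 t x * px2 z t x = 0) ->
  (forall t x x1, rho t x * pt3 zeta t x x1 + phi0 t x * px3 zeta t x x1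
                     + phi1 rho phi0 lam t x x1 * px13 zeta t x x1 = 0) ->
  (forall t x x1, func_indep2 z zeta t x x1) ->
  (forall t x x1, px13 zeta t x x1 <> 0) ->
  complete_invariants rho phi0 lam z zeta.
Proof.
  intros Hr Hp Hl Hz Hze Iz Ize Hind Hze1.
  set (zz := fun t x (_ : R) => z t x).
  assert (Szz : smooth3 zz) by exact Hz.
  assert (Ezz : forall t x x1, px13 zz t x x1 = 0).
  { intros. exact (deriv1_const _ _). }
  assert (Izz : forall t x x1, rho t x * pt3 zz t x x1 + phi0 t x * px3 zz t x x1
                     + phi1 rho phi0 lam t x x1 * px13 zz t x x1 = 0).
  { intros. rewrite Ezz. rewrite Rmult_0_r, Rplus_0_r. exact (Iz t x). }
  assert (EDz : Dt3 zz = fun t x x1 _ => Dt2 z t x x1).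
  { fext. unfold Dt3. rewrite Ezz. unfold Dt2. cbv beta delta [pt3 px3 pt2 px2 zz]. ring. }
  assert (EZ : zeta_z z zeta = fun a b c d => Dt3 zeta a b c d / Dt3 zz a b c d).
  { rewrite EDz. reflexivity. }
  pose proof (Sm_Dt3 _ Hze) as SN. pose proof (Sm_Dt3 _ Szz) as SD.
  pose proof (smooth_D4 _ SN) as DN. pose proof (smooth_D4 _ SD) as DD.
  split; [exact Iz|]. split; [exact Ize|]. split; [exact Hind|]. split.
  - intros t x x1 x2 Hnz.
    assert (HD : Dt3 zz t x x1 x2 <> 0) by (rewrite EDz; exact Hnz).
    pose proof (inv_Dt3 _ _ _ _ Hr Hp Hl Hze Ize t x x1 x2) as GN.
    pose proof (inv_Dt3 _ _ _ _ Hr Hp Hl Szz Izz t x x1 x2) as GD.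
    unfold pt4, px4, px14, pw4 in *. rewrite EZ.
    rewrite !pd4_div; auto.
    set (N := Dt3 zeta t x x1 x2) in *. set (D := Dt3 zz t x x1 x2) in *.
    set (N0 := pd4 0 (Dt3 zeta) t x x1 x2) in *. set (N1 := pd4 1 (Dt3 zeta) t x x1 x2) in *.
    set (N2 := pd4 2 (Dt3 zeta) t x x1 x2) in *. set (N3 := pd4 3 (Dt3 zeta) t x x1 x2) in *.
    set (D0 := pd4 0 (Dt3 zz) t x x1 x2) in *. set (D1 := pd4 1 (Dt3 zz) t x x1 x2) in *.
    set (D2 := pd4 2 (Dt3 zz) t x x1 x2) in *. set (D3 := pd4 3 (Dt3 zz) t x x1 x2) in *.
    set (c1 := phi1 rho phi0 lam t x x1) in *. set (c2 := phi2 rho phi0 lam t x x1 x2) in *.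
    transitivity (((rho t x * N0 + phi0 t x * N1 + c1 * N2 + c2 * N3) * D
                   - (rho t x * D0 + phi0 t x * D1 + c1 * D2 + c2 * D3) * N) / D²).
    + unfold Rsqr. field. auto.
    + rewrite GN, GD. unfold Rsqr. field. auto.
  - intros t x x1 x2 Hnz.
    assert (HD : Dt3 zz t x x1 x2 <> 0) by (rewrite EDz; exact Hnz).
    assert (Q3 : pd4 3 (zeta_z z zeta) t x x1 x2 = px13 zeta t x x1 / Dt3 zz t x x1 x2).
    { rewrite EZ, pd4_div; auto. change (pd4 3 (Dt3 zeta) t x x1 x2) with (pw4 (Dt3 zeta) t x x1 x2).
      change (pd4 3 (Dt3 zz) t x x1 x2) with (pw4 (Dt3 zz) t x x1 x2).
      rewrite !pw4_Dt3; auto. rewrite Ezz. unfold Rsqr. field. auto. }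
    assert (Hq : px13 zeta t x x1 / Dt3 zz t x x1 x2 <> 0).
    { unfold Rdiv. apply Rmult_integral_contrapositive_currified; auto. apply Rinv_neq_0_compat; auto. }
    destruct (Hind t x x1) as [H1 | [H1 | H1]].
    + exists 0%nat, 1%nat, 3%nat. split; [lia|]. split; [lia|]. split; [lia|].
      rewrite Q3, p3_lift2, pw_lift3. unfold det3.
      change (pd4 0 (lift2 z) t x x1 x2) with (pt2 z t x). change (pd4 1 (lift2 z) t x x1 x2) with (px2 z t x).
      change (pd4 0 (lift3 zeta) t x x1 x2) with (pt3 zeta t x x1). change (pd4 1 (lift3 zeta) t x x1 x2) with (px3 zeta t x x1).
      replace (pt2 z t x * (px3 zeta t x x1 * (px13 zeta t x x1 / Dt3 zz t x x1 x2) - 0 * pd4 1 (zeta_z z zeta) t x x1 x2) -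
               px2 z t x * (pt3 zeta t x x1 * (px13 zeta t x x1 / Dt3 zz t x x1 x2) - 0 * pd4 0 (zeta_z z zeta) t x x1 x2) +
               0 * (pt3 zeta t x x1 * pd4 1 (zeta_z z zeta) t x x1 x2 - px3 zeta t x x1 * pd4 0 (zeta_z z zeta) t x x1 x2))
        with ((px13 zeta t x x1 / Dt3 zz t x x1 x2) * (pt2 z t x * px3 zeta t x x1 - px2 z t x * pt3 zeta t x x1)) by ring.
      apply Rmult_integral_contrapositive_currified; auto.
    + exists 0%nat, 2%nat, 3%nat. split; [lia|]. split; [lia|]. split; [lia|].
      rewrite Q3, p3_lift2, pw_lift3, p2_lift2. unfold det3.
      change (pd4 0 (lift2 z) t x x1 x2) with (pt2 z t x).
      change (pd4 0 (lift3 zeta) t x x1 x2) with (pt3 zeta t x x1). change (pd4 2 (lift3 zeta) t x x1 x2) with (px13 zeta t x x1).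
      replace (pt2 z t x * (px13 zeta t x x1 * (px13 zeta t x x1 / Dt3 zz t x x1 x2) - 0 * pd4 2 (zeta_z z zeta) t x x1 x2) -
               0 * (pt3 zeta t x x1 * (px13 zeta t x x1 / Dt3 zz t x x1 x2) - 0 * pd4 0 (zeta_z z zeta) t x x1 x2) +
               0 * (pt3 zeta t x x1 * pd4 2 (zeta_z z zeta) t x x1 x2 - px13 zeta t x x1 * pd4 0 (zeta_z z zeta) t x x1 x2))
        with ((px13 zeta t x x1 / Dt3 zz t x x1 x2) * (pt2 z t x * px13 zeta t x x1)) by ring.
      apply Rmult_integral_contrapositive_currified; auto.
    + exists 1%nat, 2%nat, 3%nat. split; [lia|]. split; [lia|]. split; [lia|].
      rewrite Q3, p3_lift2, pw_lift3, p2_lift2. unfold det3.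
      change (pd4 1 (lift2 z) t x x1 x2) with (px2 z t x).
      change (pd4 1 (lift3 zeta) t x x1 x2) with (px3 zeta t x x1). change (pd4 2 (lift3 zeta) t x x1 x2) with (px13 zeta t x x1).
      replace (px2 z t x * (px13 zeta t x x1 * (px13 zeta t x x1 / Dt3 zz t x x1 x2) - 0 * pd4 2 (zeta_z z zeta) t x x1 x2) -
               0 * (px3 zeta t x x1 * (px13 zeta t x x1 / Dt3 zz t x x1 x2) - 0 * pd4 1 (zeta_z z zeta) t x x1 x2) +
               0 * (px3 zeta t x x1 * pd4 2 (zeta_z z zeta) t x x1 x2 - px13 zeta t x x1 * pd4 1 (zeta_z z zeta) t x x1 x2))
        with ((px13 zeta t x x1 / Dt3 zz t x x1 x2) * (px2 z t x * px13 zeta t x x1)) by ring.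
      apply Rmult_integral_contrapositive_currified; auto.
Qed.

Lemma Atot_mult3 F H (h : fun4) (g : fun3) t x x1 w :
  smooth4 h -> smooth3 g ->
  Atot F H (fun t x x1 w => h t x x1 w * g t x x1) t x x1 w
  = Atot F H h t x x1 w * g t x x1 + h t x x1 w * Dt3 g t x x1 (F t x x1).
Proof.
  intros Sh Sg.
  assert (E0 : pt4 (fun t x x1 w => h t x x1 w * g t x x1) t x x1 w = pt4 h t x x1 w * g t x x1 + h t x x1 w * pt3 g t x x1).
  { apply pd4_val. cbv beta iota delta [slice4 pick4]. (eapply dl_val; [dch|]; cbv beta; ring). }
  assert (E1 : px4 (fun t x x1 w => h t x x1 w * g t x x1) t x x1 w = px4 h t x x1 w * g t x x1 + h t x x1 w * px3 g t x x1).
  { apply pd4_val. cbv beta iota delta [slice4 pick4]. (eapply dl_val; [dch|]; cbv beta; ring). }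
  assert (E2 : px14 (fun t x x1 w => h t x x1 w * g t x x1) t x x1 w = px14 h t x x1 w * g t x x1 + h t x x1 w * px13 g t x x1).
  { apply pd4_val. cbv beta iota delta [slice4 pick4]. (eapply dl_val; [dch|]; cbv beta; ring). }
  assert (E3 : pw4 (fun t x x1 w => h t x x1 w * g t x x1) t x x1 w = pw4 h t x x1 w * g t x x1).
  { apply pd4_val. cbv beta iota delta [slice4 pick4]. (eapply dl_val; [dch|]; cbv beta; ring). }
  unfold Atot. rewrite E0, E1, E2, E3. unfold Dt3. ring.
Qed.

Lemma Atot_mult2 F H (h : fun4) (g : fun2) t x x1 w :
  smooth4 h -> smooth2 g ->
  Atot F H (fun t x x1 w => g t x * h t x x1 w) t x x1 w
  = g t x * Atot F H h t x x1 w + h t x x1 w * Dt2 g t x x1.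
Proof.
  intros Sh Sg.
  assert (E0 : pt4 (fun t x x1 w => g t x * h t x x1 w) t x x1 w = pt2 g t x * h t x x1 w + g t x * pt4 h t x x1 w).
  { apply pd4_val. cbv beta iota delta [slice4 pick4]. (eapply dl_val; [dch|]; cbv beta; ring). }
  assert (E1 : px4 (fun t x x1 w => g t x * h t x x1 w) t x x1 w = px2 g t x * h t x x1 w + g t x * px4 h t x x1 w).
  { apply pd4_val. cbv beta iota delta [slice4 pick4]. (eapply dl_val; [dch|]; cbv beta; ring). }
  assert (E2 : px14 (fun t x x1 w => g t x * h t x x1 w) t x x1 w = g t x * px14 h t x x1 w).
  { apply pd4_val. cbv beta iota delta [slice4 pick4]. (eapply dl_val; [dch|]; cbv beta; ring). }
  assert (E3 : pw4 (fun t x x1 w => g t x * h t x x1 w) t x x1 w = g t x * pw4 h t x x1 w).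
  { apply pd4_val. cbv beta iota delta [slice4 pick4]. (eapply dl_val; [dch|]; cbv beta; ring). }
  unfold Atot. rewrite E0, E1, E2, E3. unfold Dt2. ring.
Qed.

Lemma Atot_zero F H t x x1 w : Atot F H (fun _ _ _ _ => 0) t x x1 w = 0.
Proof. unfold Atot, pt4, px4, px14, pw4. rewrite !pd4_const. ring. Qed.

Lemma Dt2_const c t x x1 : Dt2 (fun _ _ => c) t x x1 = 0.
Proof. unfold Dt2, pt2, px2. rewrite !deriv1_const. ring. Qed.

Lemma abs_small d : (forall eps, 0 < eps -> Rabs d < eps) -> d = 0.
Proof.
  intro H. destruct (Req_dec d 0) as [E|E]; auto.
  pose proof (Rabs_pos_lt d E). specialize (H _ H0). lra.
Qed.

Lemma indep_w (g : fun4) (c : fun2) : C4 g ->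
  (forall t x x1 w w', x1 <> c t x -> g t x x1 w = g t x x1 w') ->
  forall t x x1 w w', g t x x1 w = g t x x1 w'.
Proof.
  intros Cg Hg t x x1 w w'.
  destruct (Req_dec x1 (c t x)) as [E|E]; [|apply Hg; auto].
  apply Rminus_diag_uniq. apply abs_small. intros eps He.
  destruct (Cg t x x1 w (eps/2) ltac:(lra)) as [d1 [Hd1 H1]].
  destruct (Cg t x x1 w' (eps/2) ltac:(lra)) as [d2 [Hd2 H2]].
  set (y := x1 + Rmin d1 d2 / 2).
  assert (Hm : 0 < Rmin d1 d2) by (apply Rmin_pos; auto).
  pose proof (Rmin_l d1 d2). pose proof (Rmin_r d1 d2).
  assert (Hy : Rabs (y - x1) < d1 /\ Rabs (y - x1) < d2).
  { unfold y. replace (x1 + Rmin d1 d2 / 2 - x1) with (Rmin d1 d2 / 2) by ring.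
    rewrite Rabs_pos_eq by lra. lra. }
  assert (R0 : forall a, Rabs (a - a) = 0). { intro a. unfold Rminus. rewrite Rplus_opp_r. apply Rabs_R0. }
  assert (A1 := H1 t x y w ltac:(rewrite R0; lra) ltac:(rewrite R0; lra) (proj1 Hy) ltac:(rewrite R0; lra)).
  assert (A2 := H2 t x y w' ltac:(rewrite R0; lra) ltac:(rewrite R0; lra) (proj2 Hy) ltac:(rewrite R0; lra)).
  assert (Eq : g t x y w = g t x y w').
  { apply Hg. unfold y. rewrite <- E. lra. }
  rewrite Eq in A1.
  apply Rabs_def2 in A1. apply Rabs_def2 in A2. apply Rabs_def1; lra.
Qed.

Ltac smt2 := repeat match goal with
 | |- smooth4 (fun _ _ _ _ => ?c) => apply Sm_const
 | |- smooth4 (fun t _ _ _ => t) => apply Sm_t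
 | |- smooth4 (fun _ x _ _ => x) => apply Sm_x
 | |- smooth4 (fun _ _ x1 _ => x1) => apply Sm_x1
 | |- smooth4 (fun _ _ _ w => w) => apply Sm_w
 | |- smooth4 (fun a b c d => _ + _) => apply Sm_plus
 | |- smooth4 (fun a b c d => _ - _) => apply Sm_minus
 | |- smooth4 (fun a b c d => _ * _) => apply Sm_mult
 | |- smooth4 (fun a b c d => _ / _) => apply Sm_div
 | |- smooth4 (fun a b c d => - _) => apply Sm_opp
 | |- smooth4 (fun a b c d => ?g a b c d) => assumption
 | |- smooth4 (fun a b c d => ?g a b c) => change (smooth3 g); assumption
 | |- smooth4 (fun a b c d => ?g a b) => change (smooth2 g); assumption
 | |- smooth4 _ => assumption
 end.

Ltac zero_by S := match type of S with ?e = 0 => transitivity e; [ring | exact S] end.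

Theorem theorem3p1
  (F H : R -> R -> R -> R) (xi eta0 psi0 : R -> R -> R -> R -> R)
  (z : R -> R -> R) (zeta : R -> R -> R -> R)
  (HF : smooth3 F) (HH : smooth3 H)
  (Hxi : smooth4 xi) (Heta0 : smooth4 eta0) (Hpsi0 : smooth4 psi0)
  (Hz : smooth2 z) (Hzeta : smooth3 zeta)
  (Hsym : gen_symmetry F H xi eta0 psi0)
  (Hnonlocal : exists t x x1 w,
      (pw4 xi t x x1 w) ^ 2 + (pw4 eta0 t x x1 w) ^ 2 <> 0)
  (Hindep : forall t x x1, func_indep2 z zeta t x x1)
  (Hzeta_x1 : forall t x x1, px13 zeta t x x1 <> 0)
  (Hvz : forall t x x1 w,
      xi t x x1 w * pt2 z t x + eta0 t x x1 w * px2 z t x = 0)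
  (Hvzeta : forall t x x1 w,
      xi t x x1 w * pt3 zeta t x x1 + eta0 t x x1 w * px3 zeta t x x1
      + eta1 F H xi eta0 t x x1 w * px13 zeta t x x1 = 0)
  (Hode : exists G : R -> R -> R -> R, forall t x x1 x2, Dt2 z t x x1 <> 0 ->
      (x2 = F t x x1 <-> G (z t x) (zeta t x x1) (zeta_z z zeta t x x1 x2) = 0)) :
  ((forall t x x1 w, xi t x x1 w <> 0) ->
     exists (phi0 : R -> R -> R) (lam : R -> R -> R -> R),
       smooth2 phi0 /\ smooth3 lam /\
       (forall t x x1 w, eta0 t x x1 w / xi t x x1 w = phi0 t x) /\
       (forall t x x1 w, Atot F H xi t x x1 w / xi t x x1 w = lam t x x1) /\
       lambda_symmetry F (fun _ _ => 1) phi0 lam /\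
       complete_invariants (fun _ _ => 1) phi0 lam z zeta)
  /\
  ((forall t x x1 w, xi t x x1 w = 0) ->
   (forall t x x1 w, eta0 t x x1 w <> 0) ->
     exists lam : R -> R -> R -> R,
       smooth3 lam /\
       (forall t x x1 w, Atot F H eta0 t x x1 w / eta0 t x x1 w = lam t x x1) /\
       lambda_symmetry F (fun _ _ => 0) (fun _ _ => 1) lam /\
       complete_invariants (fun _ _ => 0) (fun _ _ => 1) lam z zeta).
Proof.
  pose proof (Sm_pt4 _ Hxi). pose proof (Sm_px4 _ Hxi). pose proof (Sm_px14 _ Hxi). pose proof (Sm_pw4 _ Hxi).
  pose proof (Sm_pt4 _ Heta0). pose proof (Sm_px4 _ Heta0). pose proof (Sm_px14 _ Heta0). pose proof (Sm_pw4 _ Heta0).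
  pose proof (Sm_pt2 _ Hz). pose proof (Sm_px2 _ Hz).
  pose proof (Sm_pt3 _ Hzeta). pose proof (Sm_px3 _ Hzeta). pose proof (Sm_px13 _ Hzeta).
  assert (S1 : smooth2 (fun _ _ => 1)) by exact (Sm_const 1).
  assert (S0 : smooth2 (fun _ _ => 0)) by exact (Sm_const 0).
  split.
  -
    intro Hxi0.
    assert (Hzx : forall t x, px2 z t x <> 0).
    { intros t x E. pose proof (Hvz t x 0 0) as V. rewrite E, Rmult_0_r, Rplus_0_r in V.
      apply Rmult_integral in V. destruct V as [V|V]; [exact (Hxi0 _ _ _ _ V)|].
      destruct (Hindep t x 0) as [A|[A|A]]; apply A; rewrite ?V, ?E; ring. }
    set (phi0 := fun t x => - pt2 z t x / px2 z t x).
    assert (Sphi0 : smooth2 phi0).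
    { unfold smooth2, lift2, phi0. smt2. intros; apply Hzx. }
    assert (Heta : forall t x x1 w, eta0 t x x1 w = phi0 t x * xi t x x1 w).
    { intros t x x1 w. unfold phi0. pose proof (Hvz t x x1 w) as V. pose proof (Hzx t x).
      apply (Rmult_eq_reg_r (px2 z t x)); auto.
      replace (- pt2 z t x / px2 z t x * xi t x x1 w * px2 z t x) with (- (xi t x x1 w * pt2 z t x)) by (field; auto).
      lra. }
    assert (Eeta : eta0 = fun t x x1 w => phi0 t x * xi t x x1 w) by (fext; apply Heta).
    set (lam4 := fun t x x1 w => Atot F H xi t x x1 w / xi t x x1 w).
    assert (Slam4 : smooth4 lam4).
    { unfold lam4, Atot. smt2. intros; apply Hxi0. }
    assert (HAxi : forall t x x1 w, Atot F H xi t x x1 w = xi t x x1 w * lam4 t x x1 w).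
    { intros. unfold lam4. field. apply Hxi0. }
    assert (Heta1 : forall t x x1 w, eta1 F H xi eta0 t x x1 w
               = xi t x x1 w * (Dt2 phi0 t x x1 + lam4 t x x1 w * (phi0 t x - x1))).
    { intros. unfold eta1. rewrite Eeta. rewrite Atot_mult2; auto. rewrite HAxi. ring. }
    assert (Hvz' : forall t x x1 w, pt3 zeta t x x1 + phi0 t x * px3 zeta t x x1
               + (Dt2 phi0 t x x1 + lam4 t x x1 w * (phi0 t x - x1)) * px13 zeta t x x1 = 0).
    { intros. pose proof (Hvzeta t x x1 w) as V. rewrite Heta, Heta1 in V.
      apply (Rmult_eq_reg_l (xi t x x1 w)); [|apply Hxi0]. rewrite Rmult_0_r. zero_by V. }
    assert (Ind : forall t x x1 w w', lam4 t x x1 w = lam4 t x x1 w').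
    { apply (indep_w lam4 phi0). apply smooth_C4, Slam4.
      intros t x x1 w w' Hne.
      pose proof (Hvz' t x x1 w) as V1. pose proof (Hvz' t x x1 w') as V2.
      assert (D : (lam4 t x x1 w - lam4 t x x1 w') * ((phi0 t x - x1) * px13 zeta t x x1) = 0).
      { transitivity ((pt3 zeta t x x1 + phi0 t x * px3 zeta t x x1
               + (Dt2 phi0 t x x1 + lam4 t x x1 w * (phi0 t x - x1)) * px13 zeta t x x1)
               - (pt3 zeta t x x1 + phi0 t x * px3 zeta t x x1
               + (Dt2 phi0 t x x1 + lam4 t x x1 w' * (phi0 t x - x1)) * px13 zeta t x x1)); [ring|].
        rewrite V1, V2. ring. }
      apply Rmult_integral in D. destruct D as [D|D]; [lra|].
      apply Rmult_integral in D. destruct D as [D|D]; [|exfalso; exact (Hzeta_x1 _ _ _ D)].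
      exfalso; apply Hne; lra. }
    set (lam := fun t x x1 => lam4 t x x1 0).
    assert (Elam : forall t x x1 w, lam4 t x x1 w = lam t x x1) by (intros; apply Ind).
    assert (Slam : smooth3 lam).
    { unfold smooth3. replace (lift3 lam) with lam4; auto. fext. unfold lift3. apply Elam. }
    assert (Eeta1 : eta1 F H xi eta0 = fun t x x1 w => xi t x x1 w * phi1 (fun _ _ => 1) phi0 lam t x x1).
    { fext. rewrite Heta1. unfold phi1. rewrite Dt2_const, Elam. ring. }
    exists phi0, lam. split; [exact Sphi0|]. split; [exact Slam|].
    split. { intros. rewrite Heta. field. apply Hxi0. }
    split. { intros. exact (Elam t x x1 w). }
    split.
    + intros t x x1. unfold phi2. rewrite Dt2_const.
      pose proof (proj1 Hsym t x x1 0) as S. rewrite Eeta1 in S. rewrite Atot_mult3 in S; auto.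
      2: { apply Sm_phi1; auto. }
      rewrite Heta, HAxi, Elam in S.
      apply (Rmult_eq_reg_l (xi t x x1 0)); [|apply Hxi0]. rewrite Rmult_0_r. zero_by S.
    + apply complete_inv; auto.
      * intros t x. unfold phi0. field. apply Hzx.
      * intros t x x1. pose proof (Hvz' t x x1 0) as V. unfold phi1. rewrite Dt2_const.
        unfold lam. zero_by V.
  -
    intros Hxi0 Heta00.
    assert (Exi : xi = fun _ _ _ _ => 0) by (fext; apply Hxi0).
    assert (Hzx : forall t x, px2 z t x = 0).
    { intros t x. pose proof (Hvz t x 0 0) as V. rewrite Hxi0 in V.
      apply (Rmult_eq_reg_l (eta0 t x 0 0)); [|apply Heta00]. rewrite Rmult_0_r. zero_by V. }
    set (lam := fun t x x1 => - px3 zeta t x x1 / px13 zeta t x x1).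
    assert (Slam : smooth3 lam).
    { unfold smooth3, lift3, lam. smt2. intros; apply Hzeta_x1. }
    assert (HA : forall t x x1 w, Atot F H eta0 t x x1 w = eta0 t x x1 w * lam t x x1).
    { intros t x x1 w. pose proof (Hvzeta t x x1 w) as V. unfold eta1 in V.
      rewrite Exi, Atot_zero in V. cbv beta in V. unfold lam.
      apply (Rmult_eq_reg_r (px13 zeta t x x1)); [|apply Hzeta_x1].
      replace (eta0 t x x1 w * (- px3 zeta t x x1 / px13 zeta t x x1) * px13 zeta t x x1)
        with (- (eta0 t x x1 w * px3 zeta t x x1)) by (field; apply Hzeta_x1).
      lra. }
    assert (Eeta1 : eta1 F H xi eta0 = fun t x x1 w => eta0 t x x1 w * lam t x x1).
    { fext. unfold eta1. rewrite HA. rewrite Exi, Atot_zero. ring. }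
    assert (Ephi1 : phi1 (fun _ _ => 0) (fun _ _ => 1) lam = lam).
    { apply functional_extensionality; intro; apply functional_extensionality; intro;
      apply functional_extensionality; intro. unfold phi1. rewrite !Dt2_const. ring. }
    exists lam. split; [exact Slam|].
    split. { intros. rewrite HA. field. apply Heta00. }
    split.
    + intros t x x1. unfold phi2. rewrite Ephi1, Dt2_const.
      pose proof (proj1 Hsym t x x1 0) as S. rewrite Eeta1 in S. rewrite Atot_mult3 in S; auto.
      rewrite HA in S. rewrite Exi, Atot_zero in S. cbv beta in S.
      apply (Rmult_eq_reg_l (eta0 t x x1 0)); [|apply Heta00]. rewrite Rmult_0_r. zero_by S.
    + apply complete_inv; auto.
      * intros t x. rewrite Hzx. ring.
      * intros t x x1. rewrite Ephi1. unfold lam. field. apply Hzeta_x1.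
Qed.
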